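(* Let $K$ be a compact hypergroup and let $\sigma$ be a non-degenerate probability measure on $K$. Then every weak$^*$ cluster point $\sigma_0$ in $M(K)$ of the sequence $\left(\frac1n\sum_{k=1}^n\sigma^k\right)_{n\geq1}$ is the normalized Haar measure on $K$.
   Context: $K$ is a compact hypergroup (Jewett/Bloom–Heyer sense), assumed to have a left Haar measure; the normalized Haar measure is the Haar measure of total mass one. $M(K)=C(K)^*$ is the measure algebra and $\sigma^k$ the $k$-fold convolution power of $\sigma$. For subsets $A,B\subseteq K$, $A*B=\bigcup_{a\in A,b\in B}\operatorname{supp}(\delta_a*\delta_b)$ and $A^n$ is the $n$-fold product. A measure $\mu\in M(K)$ is non-degenerate if $K=\overline{\bigcup_{n\geq1}(\operatorname{supp}|\mu|)^n}$. *)

(* Defs.v *)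
From HB Require Import structures.
From mathcomp Require Import all_boot all_order all_algebra.
From mathcomp Require Import all_classical all_reals topology normedtype.
Set Implicit Arguments. Unset Strict Implicit. Unset Printing Implicit Defensive.
Import Order.TTheory GRing.Theory Num.Theory.
Import numFieldNormedType.Exports.
Local Open Scope classical_set_scope.
Local Open Scope ring_scope.

(* Measures on a compact space K are represented (Riesz) as functionals on
   real functions, of which only the values on continuous functions matter. *)
Section Hypergroup.
Variables (R : realType) (K : topologicalType).

Definition Cfun (f : K -> R) : Prop := continuous f.

Definition functional := (K -> R) -> R.

Definition linear_on_C (mu : functional) : Prop :=
  forall (a : R) (f g : K -> R), Cfun f -> Cfun g ->
    mu (fun x => a * f x + g x) = a * mu f + mu g.

Definition bounded_on_C (mu : functional) : Prop :=
  exists C : R, forall (f : K -> R) (M : R), Cfun f ->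
    (forall x, `|f x| <= M) -> `|mu f| <= C * M.

Definition radon (mu : functional) : Prop := linear_on_C mu /\ bounded_on_C mu.

Definition positive_fn (mu : functional) : Prop :=
  forall f : K -> R, Cfun f -> (forall x, 0 <= f x) -> 0 <= mu f.

Definition prob (mu : functional) : Prop :=
  radon mu /\ positive_fn mu /\ mu (fun _ => 1) = 1.

Definition meq (mu nu : functional) : Prop := forall f, Cfun f -> mu f = nu f.

Definition dirac (x : K) : functional := fun f => f x.

Definition support (mu : functional) : set K :=
  [set x | forall U, nbhs x U ->
     exists f : K -> R, [/\ Cfun f, (forall y, ~ U y -> f y = 0) & mu f != 0]].

(* Jewett's axioms for a hypergroup; conv x y is the functional of the
   probability measure delta_x * delta_y. *)
Record hypergroup (conv : K -> K -> functional) (e : K) (inv : K -> K) : Prop := {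
  hg_prob : forall x y, prob (conv x y);
  hg_cont : forall f, Cfun f -> continuous (fun p : K * K => conv p.1 p.2 f);
  hg_supp_hit : forall U : set K, open U ->
     open [set p : K * K | support (conv p.1 p.2) `&` U !=set0];
  hg_supp_in : forall U : set K, open U ->
     open [set p : K * K | support (conv p.1 p.2) `<=` U];
  hg_assoc : forall x y z f, Cfun f ->
     conv x y (fun u => conv u z f) = conv y z (fun v => conv x v f);
  hg_unit : forall x f, Cfun f -> conv e x f = f x /\ conv x e f = f x;
  hg_inv_cont : continuous inv;
  hg_inv_invol : forall x, inv (inv x) = x;
  hg_inv_conv : forall x y f, Cfun f ->
     conv x y (fun z => f (inv z)) = conv (inv y) (inv x) f;
  hg_inv_supp : forall x y, support (conv x y) e <-> x = inv y
}.

Variables (conv : K -> K -> functional) (e : K).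

Definition mconv (mu nu : functional) : functional :=
  fun f => mu (fun x => nu (fun y => conv x y f)).

Fixpoint cpow (sigma : functional) (k : nat) : functional :=
  match k with
  | 0%N => dirac e
  | k'.+1 => mconv (cpow sigma k') sigma
  end.

Definition cesaro (sigma : functional) (n : nat) : functional :=
  fun f => (n%:R)^-1 * \sum_(1 <= k < n.+1) cpow sigma k f.

Definition setconv (A B : set K) : set K :=
  [set z | exists a b, [/\ A a, B b & support (conv a b) z]].

Fixpoint setpow (A : set K) (n : nat) : set K :=
  match n with
  | 0%N => [set e]
  | n'.+1 => setconv (setpow A n') A
  end.

Definition hg_nondegenerate (mu : functional) : Prop :=
  closure [set z | exists n, (0 < n)%N /\ setpow (support mu) n z] = setT.

Definition left_haar (om : functional) : Prop :=
  [/\ radon om, positive_fn om, (exists f, Cfun f /\ om f != 0) &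
      forall x f, Cfun f -> om (fun y => conv x y f) = om f].

Definition normalized_haar (om : functional) : Prop :=
  left_haar om /\ om (fun _ => 1) = 1.

Definition weak_star_cluster (s : nat -> functional) (mu : functional) : Prop :=
  forall (m : nat) (fs : 'I_m -> K -> R) (eps : R),
    (forall i, Cfun (fs i)) -> 0 < eps ->
    forall N : nat, exists n : nat,
      [/\ (1 <= n)%N, (N <= n)%N &
          forall i, `|s n (fs i) - mu (fs i)| < eps].

End Hypergroup.

(* Main.v *)
From HB Require Import structures.
Require Import Defs.
From mathcomp Require Import all_boot all_order all_algebra.
From mathcomp Require Import all_classical all_reals topology normedtype derive.
From mathcomp Require Import lra ring.

Module Helpers.
Unset Printing Implicit Defensive.
Import Order.TTheory GRing.Theory Num.Theory.
Import numFieldNormedType.Exports.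
Local Open Scope classical_set_scope.
Local Open Scope ring_scope.

Section Lin.
Variables (R : realType) (K : topologicalType).
Implicit Types (mu nu : functional R K) (f g : K -> R).

Lemma Cfun_cst (c : R) : Cfun (fun _ : K => c).
Proof. exact: cst_continuous. Qed.

Lemma CfunD f g : Cfun f -> Cfun g -> Cfun (fun x => f x + g x).
Proof. by move=> cf cg x; exact: (continuousD (cf x) (cg x)). Qed.

Lemma CfunM f g : Cfun f -> Cfun g -> Cfun (fun x => f x * g x).
Proof. by move=> cf cg x; exact: (continuousM (cf x) (cg x)). Qed.

Lemma CfunN f : Cfun f -> Cfun (fun x => - f x).
Proof. by move=> cf x; exact: (continuousN (cf x)). Qed.

Lemma CfunB f g : Cfun f -> Cfun g -> Cfun (fun x => f x - g x).
Proof. by move=> cf cg; apply: CfunD => //; apply: CfunN. Qed.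

Lemma CfunZ (a : R) f : Cfun f -> Cfun (fun x => a * f x).
Proof. by move=> cf; apply: CfunM => //; apply: Cfun_cst. Qed.

Lemma Cfun_norm f : Cfun f -> Cfun (fun x => `|f x|).
Proof.
move=> cf x; exact: (continuous_comp (cf x) (@norm_continuous R R^o (f x))).
Qed.

Lemma Cfun_sum (I : Type) (s : seq I) (F : I -> K -> R) :
  (forall i, Cfun (F i)) -> Cfun (fun x => \sum_(i <- s) F i x).
Proof.
move=> cF; elim: s => [|i s IH].
  by under eq_fun do rewrite big_nil; apply: Cfun_cst.
by under eq_fun do rewrite big_cons; apply: CfunD.
Qed.

Variable mu : functional R K.
Hypothesis L : linear_on_C mu.

Lemma lin0 : mu (fun _ => 0) = 0.
Proof.
have := @L 1 _ _ (Cfun_cst 0) (Cfun_cst 0).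
rewrite (_ : (fun _ => 1 * 0 + 0) = fun _ => 0); last by apply: funext => x; rewrite mulr0 addr0.
rewrite mul1r => /(congr1 (fun t => t - mu (fun _ => 0))).
by rewrite subrr addrK => h; rewrite -h.
Qed.

Lemma linD f g : Cfun f -> Cfun g -> mu (fun x => f x + g x) = mu f + mu g.
Proof.
move=> cf cg; have := @L 1 _ _ cf cg; rewrite mul1r => <-.
by congr mu; apply: funext => x; rewrite mul1r.
Qed.

Lemma linZ (a : R) f : Cfun f -> mu (fun x => a * f x) = a * mu f.
Proof.
move=> cf; have := @L a _ _ cf (Cfun_cst 0); rewrite lin0 addr0 => <-.
by congr mu; apply: funext => x; rewrite addr0.
Qed.

Lemma linN f : Cfun f -> mu (fun x => - f x) = - mu f.
Proof.
move=> cf; rewrite -mulN1r -linZ //; congr mu; apply: funext => x.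
by rewrite mulN1r.
Qed.

Lemma linB f g : Cfun f -> Cfun g -> mu (fun x => f x - g x) = mu f - mu g.
Proof. by move=> cf cg; rewrite linD ?linN //; apply: CfunN. Qed.

Lemma lin_cst (c : R) : mu (fun _ => c) = c * mu (fun _ => 1).
Proof.
rewrite -linZ; last exact: Cfun_cst.
by congr mu; apply: funext => x; rewrite mulr1.
Qed.

Lemma lin_sum (I : Type) (s : seq I) (F : I -> K -> R) :
  (forall i, Cfun (F i)) ->
  mu (fun x => \sum_(i <- s) F i x) = \sum_(i <- s) mu (F i).
Proof.
move=> cF; elim: s => [|i s IH].
  rewrite big_nil; transitivity (mu (fun _ => 0)); last exact: lin0.
  by congr mu; apply: funext => x; rewrite big_nil.
rewrite big_cons -IH -linD //; last exact: Cfun_sum.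
by congr mu; apply: funext => x; rewrite big_cons.
Qed.

End Lin.
Arguments Cfun_cst {R K} c.
Arguments CfunD {R K f g}.
Arguments CfunM {R K f g}.
Arguments CfunN {R K f}.
Arguments CfunB {R K f g}.
Arguments CfunZ {R K} a {f}.
Arguments Cfun_norm {R K f}.
Arguments Cfun_sum {R K I} s {F}.
Arguments lin0 {R K mu}.
Arguments linD {R K mu} L {f g}.
Arguments linZ {R K mu} L a {f}.
Arguments linN {R K mu} L {f}.
Arguments linB {R K mu} L {f g}.
Arguments lin_cst {R K mu} L c.
Arguments lin_sum {R K mu} L {I} s {F}.


Section ProbFacts.
Variables (R : realType) (K : topologicalType).
Hypothesis cptK : compact [set: K].
Variable x0 : K.

Lemma Cfun_bounded (f : K -> R) : Cfun f -> exists B, 0 <= B /\ forall x, `|f x| <= B.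
Proof.
move=> cf; have cf' : {within [set: K], continuous (fun x => `|f x|)}.
  by apply: continuous_subspaceT; apply: Cfun_norm.
have [c _ Hc] := compact_EVT_max (ex_intro _ x0 I) cptK cf'.
exists `|f c|; split => // x; apply: Hc; exact: in_setT.
Qed.

Lemma Cfun_max (f : K -> R) : Cfun f -> exists c, forall x, f x <= f c.
Proof.
move=> cf; have cf' : {within [set: K], continuous f}.
  by apply: continuous_subspaceT.
have [c _ Hc] := compact_EVT_max (ex_intro _ x0 I) cptK cf'.
by exists c => x; apply: Hc; exact: in_setT.
Qed.

Lemma radon_bound (mu : functional R K) : radon mu ->
  exists C, 0 <= C /\ forall f M, Cfun f -> (forall x, `|f x| <= M) -> `|mu f| <= C * M.
Proof.
move=> [_ [C HC]]; exists `|C|; split => // f M cf fM.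
apply: (le_trans (HC f M cf fM)); apply: ler_wpM2r; last exact: real_ler_norm (num_real _).
exact: le_trans (fM x0).
Qed.

Lemma radon_approx (mu : functional R K) C (f g : K -> R) (eps : R) :
  linear_on_C mu ->
  (forall f M, Cfun f -> (forall x, `|f x| <= M) -> `|mu f| <= C * M) ->
  Cfun f -> Cfun g -> (forall x, `|f x - g x| <= eps) -> `|mu f - mu g| <= C * eps.
Proof.
move=> L HC cf cg fg; rewrite -linB //; apply: HC => //; exact: CfunB.
Qed.

Variable mu : functional R K.
Hypothesis Pmu : prob mu.

Lemma prob_lin : linear_on_C mu. Proof. by case: Pmu => [[]]. Qed.
Lemma prob_pos : positive_fn mu. Proof. by case: Pmu => _ []. Qed.
Lemma prob_one : mu (fun _ => 1) = 1. Proof. by case: Pmu => _ []. Qed.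

Lemma prob_cst c : mu (fun _ => c) = c.
Proof. by by rewrite (lin_cst prob_lin) prob_one mulr1. Qed.

Lemma prob_le (f g : K -> R) : Cfun f -> Cfun g -> (forall x, f x <= g x) -> mu f <= mu g.
Proof.
move=> cf cg fg; rewrite -subr_ge0 -(linB prob_lin cg cf).
apply: prob_pos; first exact: CfunB.
by move=> x; rewrite subr_ge0.
Qed.

Lemma prob_le_cst (f : K -> R) m : Cfun f -> (forall x, f x <= m) -> mu f <= m.
Proof. by move=> cf fm; rewrite -(prob_cst m); apply: prob_le => //; exact: Cfun_cst. Qed.

Lemma prob_abs (f : K -> R) : Cfun f -> `|mu f| <= mu (fun x => `|f x|).
Proof.
move=> cf; rewrite ler_norml; apply/andP; split.
  rewrite -(linN prob_lin (Cfun_norm cf)).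
  apply: prob_le; [exact: (CfunN (Cfun_norm cf)) | exact: cf | move=> x].
  by rewrite lerNl -normrN ler_norm.
apply: prob_le; [exact: cf | exact: (Cfun_norm cf) | move=> x].
by rewrite ler_norm.
Qed.

Lemma prob_supp_max (g : K -> R) (m : R) (z : K) : Cfun g -> (forall x, g x <= m) -> mu g = m ->
  Defs.support mu z -> g z = m.
Proof.
move=> cg gm mug sz; apply/eqP; rewrite eq_le gm /=; rewrite leNgt; apply/negP => gzm.
pose d := (m - g z) / 2.
have d0 : 0 < d by rewrite divr_gt0 // subr_gt0.
pose U := [set y | g y < m - d].
have oU : open U.
  have := (proj1 (continuousP g) cg [set r : R | r < m - d] (@open_lt _ _)).
  by [].
have Uz : U z.
  have h : d * 2 = m - g z by rewrite /d mulrC mulrA mulrC mulrA mulVf ?mul1r // pnatr_eq0.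
  rewrite /U /=; lra.
have [f [cf fU muf]] := sz U (open_nbhs_nbhs (conj oU Uz)).
have [B [B0 fB]] := Cfun_bounded _ cf.
have H : 0 <= mu (fun y => (B / d) * (m - g y) - `|f y|).
  apply: prob_pos.
    by apply: CfunB; [apply: CfunZ; apply: CfunB => //; exact: Cfun_cst | exact: Cfun_norm].
  move=> y; rewrite subr_ge0; have [Uy|nUy] := pselect (U y).
    apply: (le_trans (fB y)).
    have hd : d <= m - g y by move: Uy; rewrite /U /=; lra.
    by rewrite mulrAC ler_pdivlMr // ler_wpM2l.
  by rewrite fU // normr0 mulr_ge0 // ?divr_ge0 ?subr_ge0 // ltW.
have L := prob_lin.
have c1 : Cfun (fun y => m - g y) by apply: CfunB => //; exact: Cfun_cst.
rewrite (linB L (CfunZ (B / d) c1) (Cfun_norm cf)) (linZ L _ c1) (linB L (Cfun_cst m) cg) in H.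
rewrite prob_cst mug subrr mulr0 sub0r oppr_ge0 in H.
move: muf; rewrite -normr_eq0 eq_le normr_ge0 andbT.
by rewrite (le_trans (prob_abs _ cf) H).
Qed.

End ProbFacts.
Arguments radon_approx {R K mu C f g eps}.
Arguments Cfun_bounded {R K} cptK x0 {f}.
Arguments Cfun_max {R K} cptK x0 {f}.
Arguments radon_bound {R K} x0 {mu}.
Arguments prob_lin {R K mu}.
Arguments prob_pos {R K mu}.
Arguments prob_one {R K mu}.
Arguments prob_cst {R K mu} Pmu c.
Arguments prob_le {R K mu} Pmu {f g}.
Arguments prob_le_cst {R K mu} Pmu {f} m.
Arguments prob_abs {R K mu} Pmu {f}.
Arguments prob_supp_max {R K} cptK x0 {mu} Pmu {g m z}.


Section Tube.
Variables (R : realType) (K : topologicalType).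
Hypothesis cptK : compact [set: K].

Lemma tube (G : K -> K -> R) : continuous (fun p : K * K => G p.1 p.2) ->
  forall x0 (eps : R), 0 < eps ->
  exists2 U, nbhs x0 U & forall x y, U x -> `|G x y - G x0 y| < eps.
Proof.
move=> cG x0 eps e0.
have cov : forall y, [set: K] y ->
    \forall y' \near y & i \near nbhs x0, `|G i y' - G x0 y'| < eps.
  move=> y _.
  have /cvgrPdist_lt /(_ (eps / 2)) := cG (x0, y).
  rewrite divr_gt0 // => /(_ isT).
  case=> [[A B] /= [nA nB] AB].
  exists (B, A); first by split.
  move=> [y' i] [/= By' Ai] /=.
  have h1 := AB (i, y') (conj Ai By').
  have h2 := AB (x0, y') (conj (nbhs_singleton nA) By').
  rewrite /= in h1 h2.
  have := ler_distD (G x0 y) (G i y') (G x0 y').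
  rewrite distrC in h1; lra.
have H := (proj1 (compact_near_coveringP [set: K])) cptK K (nbhs x0)
  (fun i y => `|G i y - G x0 y| < eps) (nbhs_filter x0) cov.
exists [set i | forall y, `|G i y - G x0 y| < eps]; last by move=> x y; apply.
by apply: filterS H => i Hi y; apply: Hi.
Qed.

End Tube.
Arguments tube {R K} cptK {G} cG x0 {eps}.

Section Cont.
Variables (R : realType) (K : topologicalType).
Hypothesis cptK : compact [set: K].

Definition jcont (G : K -> K -> R) := continuous (fun p : K * K => G p.1 p.2).

Lemma jcont_sec1 G : jcont G -> forall x, Cfun (G x).
Proof.
move=> cG x y.
have cp : {for y, continuous (fun y' : K => (x, y'))}.
  by apply: cvg_pair; [exact: cvg_cst | exact: cvg_id].
exact: (continuous_comp cp (cG (x, y))).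
Qed.

Lemma jcont_sec2 G : jcont G -> forall y, Cfun (fun x => G x y).
Proof.
move=> cG y x.
have cp : {for x, continuous (fun x' : K => (x', y))}.
  by apply: cvg_pair; [exact: cvg_id | exact: cvg_cst].
exact: (continuous_comp cp (cG (x, y))).
Qed.

Lemma jcont_swap G : jcont G -> jcont (fun x y => G y x).
Proof.
move=> cG [a b].
have cp : {for (a, b), continuous (fun p : K * K => (p.2, p.1))}.
  by apply: cvg_pair; [exact: cvg_snd | exact: cvg_fst].
exact: (continuous_comp cp (cG (b, a))).
Qed.

Lemma tube_cont (nu : functional R K) C G : linear_on_C nu ->
  (forall f M, Cfun f -> (forall x, `|f x| <= M) -> `|nu f| <= C * M) -> 0 <= C ->
  jcont G -> Cfun (fun x => nu (G x)).
Proof.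
move=> L HC C0 cG x0; apply/cvgrPdist_lt => e e0.
have e1 : 0 < e / (C + 1) by rewrite divr_gt0 // ltr_wpDl.
have [U nU HU] := tube cptK cG x0 e1.
apply: filterS nU => x Ux.
rewrite -(linB L (jcont_sec1 _ cG x0) (jcont_sec1 _ cG x)).
apply: (le_lt_trans (HC _ (e / (C + 1)) _ _)).
- by apply: CfunB; apply: jcont_sec1.
- by move=> y; rewrite distrC; apply/ltW/HU.
rewrite mulrA ltr_pdivrMr ?ltr_wpDl //.
by rewrite mulrDr mulr1 [C * e]mulrC ltrDl.
Qed.

End Cont.
Arguments jcont {R K}.
Arguments jcont_sec1 {R K G}.
Arguments jcont_sec2 {R K G}.
Arguments jcont_swap {R K G}.
Arguments tube_cont {R K} cptK {nu C G}.

Section PU.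
Variables (R : realType) (K : topologicalType) (x0 : K).
Hypotheses (hsdf : hausdorff_space K) (cptK : compact [set: K]).

Definition pK : Type := K.
HB.instance Definition _ := Topological.on pK.
HB.instance Definition _ := isPointed.Build pK x0.

Lemma cover_finite (O : K -> set K) : (forall x, open (O x)) -> (forall x, O x x) ->
  exists s : seq K, forall y, exists2 x, x \in s & O x y.
Proof.
move=> oO Ox.
have h' : @compact pK setT := cptK; rewrite compact_cover in h'.
have [D' _ HD] := h' K setT O (fun i _ => oO i) (fun y _ => ex_intro2 _ _ y I (Ox y)).
exists (finmap.enum_fset D') => y; have [x xD Oxy] := HD y I.
by exists x.
Qed.

Lemma le_sum_mem (s : seq K) (F : K -> R) x : (forall i, 0 <= F i) -> x \in s ->
  F x <= \sum_(i <- s) F i.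
Proof.
move=> F0; elim: s => [//|a s IH]; rewrite inE big_cons => /orP [/eqP ->|xs].
  by rewrite lerDl sumr_ge0.
by rewrite (le_trans (IH xs)) // lerDr.
Qed.

Lemma partition (P : K -> set K) : (forall x, nbhs x (P x)) ->
  exists (s : seq K) (h : K -> K -> R),
  [/\ forall x, Cfun (h x), forall x y, 0 <= h x y,
      forall x y, h x y != 0 -> P x y & forall y, \sum_(x <- s) h x y = 1].
Proof.
move=> nP.
have nrm := compact_normal hsdf cptK.
have sep := proj1 (@normal_separatorP R K) nrm.
pose g x : K -> R := Urysohn (~` (P x)°) [set x].
have us x : uniform_separator (~` (P x)°) [set x].
  apply: sep.
  - exact: open_closedC (open_interior _).
  - exact: accessible_closed_set1 (hausdorff_accessible hsdf) x.
  - by rewrite -subset0 => y [nPy /= yx]; apply: nPy; rewrite yx; exact: nP.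
have g0 x y : ~ (P x)° y -> g x y = 0.
  by move=> nPy; apply: (Urysohn_sub0 (us x)); exists y.
have g1 x : g x x = 1.
  by apply: (Urysohn_sub1 (us x)); exists x.
have grange x y : 0 <= g x y.
  have : range (g x) (g x y) by exists y.
  by move/Urysohn_range; rewrite /= in_itv /= => /andP[].
have gc x : Cfun (g x) by apply: Urysohn_continuous.
pose O x := [set y | 1 / 2 < g x y].
have oO x : open (O x) by exact: (proj1 (continuousP (g x)) (gc x) _ (@open_gt R (1/2))).
have Ox x : O x x by rewrite /O /= g1 ltr_pdivrMr // mul1r ltr1n.
have [s Hs] := cover_finite O oO Ox.
pose S y := \sum_(x <- s) g x y.
have S_gt y : 0 < S y.
  have [x xs Oxy] := Hs y.
  apply: lt_le_trans (le_sum_mem s (fun i => g i y) x (fun i => grange i y) xs).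
  by apply: lt_trans Oxy; rewrite divr_gt0.
have Sc : Cfun S by apply: Cfun_sum => x; exact: gc.
exists s, (fun x y => g x y / S y); split.
- move=> x; apply: CfunM => // y.
  by apply: continuousV; [rewrite gt_eqF | exact: Sc].
- by move=> x y; rewrite divr_ge0 // ltW.
- move=> x y; rewrite mulf_eq0 negb_or => /andP [gn _].
  apply: interior_subset; apply: contrapT => nPy.
  by move: gn; rewrite (g0 _ _ nPy) eqxx.
- by move=> y /=; rewrite -mulr_suml divff //; exact: lt0r_neq0 (S_gt y).
Qed.

End PU.
Arguments partition {R K} x0 hsdf cptK {P}.

Lemma eq_eps (R : realType) (a b c : R) : 0 <= c ->
  (forall e, 0 < e -> `|a - b| <= c * e) -> a = b.
Proof.
move=> c0 H; apply/eqP; rewrite -subr_eq0 -normr_eq0; apply/negPn/negP => hne.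
have d0 : 0 < `|a - b| by rewrite lt_neqAle eq_sym hne normr_ge0.
have e0 : 0 < `|a - b| / (c + 1) by rewrite divr_gt0 // ltr_wpDl.
have := H _ e0; rewrite mulrA ler_pdivlMr ?ltr_wpDl // => h.
nra.
Qed.

Lemma lin_comb (R : realType) (K : topologicalType) (mu : functional R K) (I : Type)
  (s : seq I) (c : I -> R) (F : I -> K -> R) : linear_on_C mu -> (forall i, Cfun (F i)) ->
  mu (fun x => \sum_(i <- s) c i * F i x) = \sum_(i <- s) c i * mu (F i).
Proof.
move=> L cF; rewrite (lin_sum L s (F := fun i x => c i * F i x)).
  by apply: eq_bigr => i _; rewrite (linZ L).
by move=> i; apply: CfunZ.
Qed.

Arguments lin_comb {R K mu I} s c {F}.

Section Fubini.
Variables (R : realType) (K : topologicalType) (x0 : K).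
Hypotheses (hsdf : hausdorff_space K) (cptK : compact [set: K]).

Definition fbound (mu : functional R K) (C : R) :=
  forall f M, Cfun f -> (forall x, `|f x| <= M) -> `|mu f| <= C * M.

Lemma fubini (mu nu : functional R K) (Cm Cn : R) (G : K -> K -> R) :
  linear_on_C mu -> linear_on_C nu -> 0 <= Cm -> 0 <= Cn ->
  fbound mu Cm -> fbound nu Cn -> jcont G ->
  mu (fun x => nu (G x)) = nu (fun y => mu (fun x => G x y)).
Proof.
move=> Lm Ln Cm0 Cn0 Bm Bn cG.
have c0 : 0 <= 2 * Cm * Cn by rewrite !mulr_ge0.
apply: (@eq_eps R _ _ _ c0) => eps e0.
pose P x' := [set x | forall y, `|G x y - G x' y| < eps].
have nP x' : nbhs x' (P x').
  have [U nU HU] := tube cptK cG x' e0.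
  by apply: filterS nU => x Ux y; apply: HU.
have [s [h [hc h0 hP h1]]] := @partition R K x0 hsdf cptK _ nP.
have approx x y : `|G x y - \sum_(i <- s) h i x * G i y| <= eps.
  have -> : G x y = \sum_(i <- s) h i x * G x y by rewrite -mulr_suml h1 mul1r.
  rewrite -sumrB; apply: le_trans (ler_norm_sum _ _ _) _.
  apply: le_trans (_ : \sum_(i <- s) h i x * eps <= _); last by rewrite -mulr_suml h1 mul1r.
  apply: ler_sum => i _; rewrite -mulrBr normrM ger0_norm //.
  have [->|hn] := eqVneq (h i x) 0; first by rewrite !mul0r.
  by rewrite ler_wpM2l // ltW // (hP i x hn y).
have cGx := jcont_sec1 cG.
have cGy := jcont_sec2 cG.
have cA : Cfun (fun x => nu (G x)) := tube_cont cptK Ln Bn Cn0 cG.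
have cB : Cfun (fun y => mu (fun x => G x y)) := tube_cont cptK Lm Bm Cm0 (jcont_swap cG).
pose Z := \sum_(i <- s) mu (h i) * nu (G i).
have c1 : Cfun (fun x => \sum_(i <- s) nu (G i) * h i x).
  by apply: Cfun_sum => i; apply: CfunZ.
have c2 : Cfun (fun y => \sum_(i <- s) mu (h i) * G i y).
  by apply: Cfun_sum => i; apply: CfunZ.
have Z1 : mu (fun x => \sum_(i <- s) nu (G i) * h i x) = Z.
  rewrite (lin_comb s (fun i => nu (G i)) Lm hc) /Z.
  by apply: eq_bigr => i _; rewrite mulrC.
have Z2 : nu (fun y => \sum_(i <- s) mu (h i) * G i y) = Z.
  by rewrite (lin_comb s (fun i => mu (h i)) Ln cGx).
have D1 : `|mu (fun x => nu (G x)) - Z| <= Cm * (Cn * eps).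
  rewrite -Z1; apply: (radon_approx Lm Bm cA c1) => x.
  have -> : \sum_(i <- s) nu (G i) * h i x = nu (fun y => \sum_(i <- s) h i x * G i y).
    by rewrite (lin_comb s (fun i => h i x) Ln cGx); apply: eq_bigr => i _; rewrite mulrC.
  apply: (radon_approx Ln Bn (cGx x)) => [|y]; last exact: approx.
  by apply: Cfun_sum => i; apply: CfunZ.
have D2 : `|nu (fun y => mu (fun x => G x y)) - Z| <= Cn * (Cm * eps).
  rewrite -Z2; apply: (radon_approx Ln Bn cB c2) => y.
  have -> : \sum_(i <- s) mu (h i) * G i y = mu (fun x => \sum_(i <- s) G i y * h i x).
    by rewrite (lin_comb s (fun i => G i y) Lm hc); apply: eq_bigr => i _; rewrite mulrC.
  apply: (radon_approx Lm Bm (cGy y)) => [|x].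
    by apply: Cfun_sum => i; apply: CfunZ.
  have -> : \sum_(i <- s) G i y * h i x = \sum_(i <- s) h i x * G i y.
    by apply: eq_bigr => i _; rewrite mulrC.
  exact: approx.
have := ler_distD Z (mu (fun x => nu (G x))) (nu (fun y => mu (fun x => G x y))).
rewrite distrC in D2.
move=> T; apply: (le_trans T).
have -> : 2 * Cm * Cn * eps = Cm * (Cn * eps) + Cn * (Cm * eps).
  by rewrite mulr2n ?mulrDl; ring.
exact: lerD.
Qed.

End Fubini.
Arguments fubini {R K} x0 hsdf cptK {mu nu Cm Cn G}.
Arguments fbound {R K}.

Lemma prob_bound (R : realType) (K : topologicalType) (mu : functional R K) :
  prob mu -> fbound mu 1.
Proof.
move=> Pmu f M cf fM; rewrite mul1r; apply: le_trans (prob_abs Pmu cf) _.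
by apply: (prob_le_cst Pmu M) => //; exact: Cfun_norm.
Qed.

Lemma prob_radon (R : realType) (K : topologicalType) (mu : functional R K) :
  prob mu -> radon mu.
Proof. by move=> Pmu; split; [exact: prob_lin | exists 1; exact: prob_bound]. Qed.

Lemma dirac_prob (R : realType) (K : topologicalType) (x : K) : prob (@dirac R K x).
Proof.
split; [split|split] => //.
- by exists 1 => f M _ fM; rewrite mul1r; exact: fM.
- by move=> f _ f0; exact: f0.
Qed.

Arguments prob_bound {R K mu}.
Arguments prob_radon {R K mu}.

Section Main.
Variables (R : realType) (K : topologicalType) (conv : K -> K -> functional R K)
  (e : K) (inv : K -> K).
Hypotheses (hsdf : hausdorff_space K) (cptK : compact [set: K])
  (HG : hypergroup conv e inv).

Lemma conv_prob x y : prob (conv x y). Proof. exact: hg_prob HG x y. Qed.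
Lemma conv_jcont f : Cfun f -> jcont (fun x y => conv x y f).
Proof. by move=> cf; exact: hg_cont HG f cf. Qed.

Lemma prob_cont (nu : functional R K) G : prob nu -> jcont G -> Cfun (fun x => nu (G x)).
Proof.
move=> Pnu cG; have := tube_cont cptK (prob_lin Pnu) (prob_bound Pnu) (@ler01 R) cG.
by [].
Qed.

Lemma mix_prob (mu : functional R K) (kap : K -> functional R K) :
  prob mu -> (forall x, prob (kap x)) -> (forall f, Cfun f -> Cfun (fun x => kap x f)) ->
  prob (fun f => mu (fun x => kap x f)).
Proof.
move=> Pmu Pk ck; split; [split|split].
- move=> a f g cf cg /=.
  have -> : (fun x => kap x (fun y => a * f y + g y)) = (fun x => a * kap x f + kap x g).
    by apply: funext => x; rewrite (prob_lin (Pk x) a f g cf cg).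
  by rewrite (linD (prob_lin Pmu) (CfunZ a (ck f cf)) (ck g cg)) (linZ (prob_lin Pmu) a (ck f cf)).
- exists 1 => f M cf fM; rewrite mul1r.
  apply: le_trans (prob_abs Pmu (ck f cf)) _.
  apply: (prob_le_cst Pmu M); first by apply: Cfun_norm; exact: ck.
  move=> x; have := prob_bound (Pk x) f M cf fM; by rewrite mul1r.
- move=> f cf f0; apply: (prob_pos Pmu) => [|x]; first exact: ck.
  exact: (prob_pos (Pk x)).
- transitivity (mu (fun _ => 1)); last exact: prob_cst Pmu 1.
  congr mu; apply: funext => x; exact: (prob_one (Pk x)).
Qed.

Lemma conv_right_prob (nu : functional R K) b : prob nu ->
  prob (fun h => nu (fun v => conv b v h)).
Proof.
move=> Pnu; apply: mix_prob => // [v|f cf]; first exact: conv_prob.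
exact: (jcont_sec1 (conv_jcont _ cf) b).
Qed.

Lemma conv_left_prob (nu : functional R K) x : prob nu ->
  prob (fun h => nu (fun v => conv v x h)).
Proof.
move=> Pnu; apply: mix_prob => // [v|f cf]; first exact: conv_prob.
exact: (jcont_sec2 (conv_jcont _ cf) x).
Qed.

Lemma mconv_prob (mu sigma : functional R K) : prob mu -> prob sigma ->
  prob (mconv conv mu sigma).
Proof.
move=> Pmu Ps; apply: mix_prob => // [x|f cf]; first exact: conv_right_prob.
exact: (prob_cont _ _ Ps (conv_jcont _ cf)).
Qed.

Lemma cpow_prob (sigma : functional R K) k : prob sigma -> prob (cpow conv e sigma k).
Proof.
move=> Ps; elim: k => [|k IH] /=; first exact: dirac_prob.
exact: mconv_prob.
Qed.


Lemma cluster_one (sigma sigma0 : functional R K) : prob sigma ->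
  weak_star_cluster (cesaro conv e sigma) sigma0 -> sigma0 (fun _ => 1) = 1.
Proof.
move=> Ps cl; symmetry; apply: (@eq_eps R _ _ 1 ler01) => eps e0.
have [n [n1 _ H]] := cl 1%N (fun _ => fun _ => 1) eps (fun _ => Cfun_cst 1) e0 0%N.
have := H ord0; rewrite mul1r => h; apply: ltW.
have E : cesaro conv e sigma n (fun _ => 1) = 1.
  rewrite /cesaro.
  under eq_bigr => k _ do rewrite (prob_one (cpow_prob sigma k Ps)).
  by rewrite sumr_const_nat subn1 /= mulVf // pnatr_eq0 -lt0n.
by rewrite E in h.
Qed.

Lemma cluster_inv (sigma sigma0 : functional R K) : prob sigma ->
  weak_star_cluster (cesaro conv e sigma) sigma0 ->
  forall f, Cfun f -> sigma0 (fun x => sigma (fun y => conv x y f)) = sigma0 f.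
Proof.
move=> Ps cl f cf.
pose g := fun x => sigma (fun y => conv x y f).
have cg : Cfun g := prob_cont _ _ Ps (conv_jcont _ cf).
have [B [B0 fB]] := Cfun_bounded cptK e cf.
have c3 : (0 : R) <= 3 by [].
apply: (@eq_eps R _ _ 3 c3) => eps e0.
pose N := (Num.trunc (2 * B / eps)).+1.
pose fs : 'I_2 -> K -> R := fun i => if val i == 0%N then f else g.
have cfs i : Cfun (fs i) by rewrite /fs; case: ifP.
have [n [n1 nN H]] := cl 2%N fs eps cfs e0 N.
have Hf := H ord0.
have Hg := H (Ordinal (isT : (1 < 2)%N)).
rewrite /fs /= in Hf Hg.
have tel : cesaro conv e sigma n g - cesaro conv e sigma n f =
    n%:R^-1 * (cpow conv e sigma n.+1 f - cpow conv e sigma 1 f).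
  rewrite /cesaro -mulrBr -sumrB; congr (_ * _).
  exact: (telescope_sumr (fun k => cpow conv e sigma k f) (isT : (1 <= n.+1)%N)).
have b2 : `|cpow conv e sigma n.+1 f - cpow conv e sigma 1 f| <= 2 * B.
  apply: le_trans (ler_normB _ _) _.
  have := prob_bound (cpow_prob sigma n.+1 Ps) f B cf fB.
  have := prob_bound (cpow_prob sigma 1 Ps) f B cf fB.
  rewrite !mul1r; lra.
have NB : 2 * B / eps < n%:R.
  apply: lt_le_trans (truncnS_gt _) _.
  by rewrite ler_nat.
have n0 : (0 : R) < n%:R by rewrite ltr0n.
have Dgf : `|cesaro conv e sigma n g - cesaro conv e sigma n f| <= eps.
  rewrite tel normrM ger0_norm ?invr_ge0 ?ler0n //.
  rewrite mulrC ler_pdivrMr //.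
  apply: le_trans b2 _.
  by move: NB; rewrite ltr_pdivrMr // (mulrC eps) => /ltW.
have h1 := ler_distD (cesaro conv e sigma n g) (sigma0 g) (sigma0 f).
have h2 := ler_distD (cesaro conv e sigma n f) (cesaro conv e sigma n g) (sigma0 f).
rewrite distrC in Hg.
rewrite /g in h1 h2 Hg Dgf.
lra.
Qed.

Lemma fubR (mu nu : functional R K) G : radon mu -> radon nu -> jcont G ->
  mu (fun x => nu (G x)) = nu (fun y => mu (fun x => G x y)).
Proof.
move=> rm rn cG; have [Cm [Cm0 Bm]] := radon_bound e rm.
have [Cn [Cn0 Bn]] := radon_bound e rn.
exact: (fubini e hsdf cptK rm.1 rn.1 Cm0 Cn0 Bm Bn cG).
Qed.

Lemma harmonic (sigma sigma0 : functional R K) f : prob sigma -> radon sigma0 ->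
  (forall f, Cfun f -> sigma0 (fun x => sigma (fun y => conv x y f)) = sigma0 f) -> Cfun f ->
  forall x, sigma0 (fun y => conv y x f) =
    sigma (fun v => conv v x (fun w => sigma0 (fun u => conv u w f))).
Proof.
move=> Ps R0 Hinv cf x.
have cF : Cfun (fun y => conv y x f) := jcont_sec2 (conv_jcont _ cf) x.
rewrite -(Hinv _ cF).
have -> : (fun u => sigma (fun v => conv u v (fun y => conv y x f))) =
    (fun u => sigma (fun v => conv v x (fun w => conv u w f))).
  apply: funext => u; congr sigma; apply: funext => v; exact: (hg_assoc HG u v x cf).
exact: (fubR _ _ _ R0 (prob_radon (conv_left_prob sigma x Ps)) (conv_jcont _ cf)).
Qed.

Lemma propagate (sigma : functional R K) phi m : prob sigma -> Cfun phi ->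
  (forall x, phi x <= m) -> (forall x, phi x = sigma (fun v => conv v x phi)) ->
  forall n a, setpow conv e (Defs.support sigma) n a ->
  forall nu, prob nu -> nu phi = m -> nu (fun v => conv a v phi) = m.
Proof.
move=> Ps cphi phim harm n; elim: n => [|n IH] a /=.
  move=> -> nu Pnu num.
  rewrite -num; congr nu; apply: funext => v; exact: (hg_unit HG v cphi).1.
move=> [a' [b [Sa' Sb supp]]] nu Pnu num.
have cG : jcont (fun z v => conv z v phi) := conv_jcont _ cphi.
pose k z := nu (fun v => conv z v phi).
have ck : Cfun k := prob_cont _ _ Pnu cG.
have km z : k z <= m.
  apply: (prob_le_cst Pnu m); first exact: (jcont_sec1 cG z).
  by move=> v; apply: (prob_le_cst (conv_prob z v) m cphi phim).
have kb : k b = m.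
  apply: (prob_supp_max cptK e Ps ck km _ Sb).
  rewrite /k (fubR _ _ _ (prob_radon Ps) (prob_radon Pnu) cG).
  by rewrite -num; congr nu; apply: funext => v; rewrite -harm.
apply: (prob_supp_max cptK e (conv_prob a' b) ck km _ supp).
rewrite /k (fubR _ _ _ (prob_radon (conv_prob a' b)) (prob_radon Pnu) cG).
have -> : (fun v => conv a' b (fun w => conv w v phi)) =
    (fun v => conv b v (fun w => conv a' w phi)).
  by apply: funext => v; exact: (hg_assoc HG a' b v cphi).
exact: (IH a' Sa' _ (conv_right_prob nu b Pnu) kb).
Qed.

Lemma right_inv (sigma sigma0 : functional R K) : prob sigma ->
  hg_nondegenerate conv e sigma -> radon sigma0 ->
  weak_star_cluster (cesaro conv e sigma) sigma0 ->
  forall f x, Cfun f -> sigma0 (fun y => conv y x f) = sigma0 f.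
Proof.
move=> Ps nd R0 cl f x cf.
have Hinv := cluster_inv sigma sigma0 Ps cl.
pose phi w := sigma0 (fun u => conv u w f).
have [C [C0 BC]] := radon_bound e R0.
have cphi : Cfun phi := tube_cont cptK R0.1 BC C0 (jcont_swap (conv_jcont _ cf)).
have harm : forall w, phi w = sigma (fun v => conv v w phi).
  exact: (harmonic sigma sigma0 f Ps R0 Hinv cf).
have [x0 Hx0] := Cfun_max cptK e cphi.
have prop := propagate sigma phi (phi x0) Ps cphi Hx0 harm.
have cA : continuous (fun a => conv a x0 phi) := jcont_sec2 (conv_jcont _ cphi) x0.
have A a : conv a x0 phi = phi x0.
  have sub : [set z | exists n, (0 < n)%N /\ setpow conv e (Defs.support sigma) n z] `<=`
      (fun a => conv a x0 phi) @^-1` [set r | r = phi x0].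
    move=> z [n [_ Hz]]; exact: (prop n z Hz (@dirac R K x0) (dirac_prob R K x0) erefl).
  have := closureS sub; rewrite nd => /(_ a I).
  move=> H.
  have cD : closed [set r : R | r = phi x0] by exact: closed_eq.
  exact: (@preimage_closed K R (fun a => conv a x0 phi) [set r : R | r = phi x0]
     (fun t _ => cA t) cD a H).
have phiw w : phi w = phi x0.
  have h1 := hg_assoc HG w (inv x0) x0 cphi.
  have cg : Cfun (fun v => conv w v phi) := jcont_sec1 (conv_jcont _ cphi) w.
  have gm v : conv w v phi <= phi x0 := prob_le_cst (conv_prob w v) (phi x0) cphi Hx0.
  have mug : conv (inv x0) x0 (fun v => conv w v phi) = phi x0.
    rewrite -h1; transitivity (conv w (inv x0) (fun _ => phi x0)).
      by congr (conv w (inv x0)); apply: funext => u; exact: A.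
    exact: prob_cst (conv_prob w (inv x0)) (phi x0).
  have sz : Defs.support (conv (inv x0) x0) e := (hg_inv_supp HG (inv x0) x0).2 erefl.
  have := prob_supp_max cptK e (conv_prob (inv x0) x0) cg gm mug sz.
  by rewrite (hg_unit HG w cphi).2.
have -> : sigma0 f = phi e.
  by rewrite /phi; congr sigma0; apply: funext => y; rewrite (hg_unit HG y cf).2.
by rewrite -/(phi x) phiw (phiw e).
Qed.

Lemma main_result (sigma : functional R K) : prob sigma -> hg_nondegenerate conv e sigma ->
  forall omega : functional R K, normalized_haar conv omega ->
  forall sigma0 : functional R K, radon sigma0 ->
  weak_star_cluster (cesaro conv e sigma) sigma0 -> meq sigma0 omega.
Proof.
move=> Ps nd om [[Rom _ _ Iom] om1] s0 R0 cl f cf.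
have rinv := right_inv sigma s0 Ps nd R0 cl.
have one := cluster_one sigma s0 Ps cl.
have := fubR s0 om (fun x y => conv x y f) R0 Rom (conv_jcont _ cf).
have -> : (fun x => om (fun y => conv x y f)) = (fun _ => om f).
  by apply: funext => x; exact: Iom.
have -> : (fun y => s0 (fun x => conv x y f)) = (fun _ => s0 f).
  by apply: funext => y; exact: rinv.
by rewrite (lin_cst R0.1) (lin_cst Rom.1) one om1 !mulr1.
Qed.

End Main.

End Helpers.

Theorem corollary4p13 (R : realType) (K : topologicalType)
  (conv : K -> K -> functional R K) (e : K) (inv : K -> K) :
  hausdorff_space K -> compact [set: K] -> hypergroup conv e inv ->
  forall sigma : functional R K, prob sigma -> hg_nondegenerate conv e sigma ->
  forall omega : functional R K, normalized_haar conv omega ->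
  forall sigma0 : functional R K, radon sigma0 ->
  weak_star_cluster (cesaro conv e sigma) sigma0 ->
  meq sigma0 omega.
Proof.
move=> hsdf cptK HG.
exact: (@Helpers.main_result R K conv e inv hsdf cptK HG).
Qed.
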